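(* Let $\mathcal T_{\mathcal I}$ be a cluster tree in which every non-leaf cluster has exactly two sons, and let $(V_t)_{t\in\mathcal T_{\mathcal I}}$ be a nested cluster basis of rank $k$ with transfer matrices $(E_t)$, i.e. $V_{t|\hat t'\times k}=V_{t'}E_{t'}$ for all $t'\in\mathrm{sons}(t)$. Let $(Q_t)_{t\in\mathcal T_{\mathcal I}}$ be constructed as follows: for leaves $t$, $Q_t\in\mathbb{R}^{\hat t\times k_t}$ is any matrix with orthonormal columns, and we set $\widehat Q_t:=Q_t$, $\widehat V_t:=V_t$; for a non-leaf $t$ with sons $t_1,t_2$, set $U_t:=\begin{pmatrix}Q_{t_1}&0\\0&Q_{t_2}\end{pmatrix}$, $\widehat V_t:=U_t^TV_t$, choose $\widehat Q_t\in\mathbb{R}^{(k_{t_1}+k_{t_2})\times k_t}$ with orthonormal columns, and set $Q_t:=U_t\widehat Q_t$. Let $t_0\in\mathcal T_{\mathcal I}$, $N\in\mathbb N$, and let $(M_r)_{r\in\mathrm{sons}^*(t_0)}$ be matrices $M_r\in\mathbb{R}^{k\times N}$ satisfying $M_{r'}=E_{r'}M_r$ for all $r\in\mathrm{sons}^*(t_0)$ and $r'\in\mathrm{sons}(r)$. Then $$\|Q_{t_0}Q_{t_0}^TV_{t_0}M_{t_0}-V_{t_0}M_{t_0}\|_F^2=\sum_{r\in\mathrm{sons}^*(t_0)}\|\widehat Q_r\widehat Q_r^T\widehat V_rM_r-\widehat V_rM_r\|_F^2.$$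
   Context: A cluster tree for a finite index set $\mathcal I$ is a tree whose nodes $t$ are labeled by subsets $\hat t\subseteq\mathcal I$, the root being labeled $\mathcal I$ and the labels of the sons of a non-leaf node forming a disjoint partition of its label. $\mathrm{sons}^*(t)$ denotes the set of descendants of $t$ including $t$ itself: $\mathrm{sons}^*(t)=\{t\}$ if $t$ is a leaf and $\{t\}\cup\bigcup_{t'\in\mathrm{sons}(t)}\mathrm{sons}^*(t')$ otherwise. $\|\cdot\|_F$ is the Frobenius norm. *)

(* Defs.v *)
From HB Require Import structures.
From mathcomp Require Import all_boot all_order all_algebra.
Set Implicit Arguments. Unset Strict Implicit. Unset Printing Implicit Defensive.
Import Order.TTheory GRing.Theory Num.Theory.
Local Open Scope ring_scope.

Section Defs.
Variables (n : nat) (Node : finType).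
Variable sons : Node -> option (Node * Node).

Definition sonrel : rel Node := fun t t' =>
  if sons t is Some (a, b) then (t' == a) || (t' == b) else false.

Definition sons_star (t0 : Node) : {set Node} := [set r | connect sonrel t0 r].

Definition is_bin_cluster_tree (root : Node) (lbl : Node -> {set 'I_n}) : Prop :=
  [/\ lbl root = [set: 'I_n],
      forall t, connect sonrel root t,
      [set t | sonrel t root] = set0,
      forall t', t' != root -> #|[set t | sonrel t t']| = 1%N &
      forall t a b, sons t = Some (a, b) ->
        [/\ a != b, lbl a :&: lbl b = set0 & lbl a :|: lbl b = lbl t]].

(* A matrix in R^{s x m}, s a subset of 'I_n, is encoded as an n x m matrix
   whose rows outside s vanish (extension by zero). *)
Definition supported (R : nzRingType) m (s : {set 'I_n}) (X : 'M[R]_(n, m)) : Prop :=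
  forall i, i \notin s -> row i X = 0.

Variable kt : Node -> nat.

(* row dimension of \hat Q_t : k_{t1} + k_{t2} for non-leaves, \hat t for leaves *)
Definition rowdim_of (o : option (Node * Node)) : nat :=
  if o is Some p then (kt p.1 + kt p.2)%N else n.
Definition rowdim (t : Node) : nat := rowdim_of (sons t).

(* U_t = blockdiag(Q_{t1}, Q_{t2}) for non-leaves; the identity for leaves
   (so that \hat Q_t = Q_t and \hat V_t = V_t there). *)
Definition Umx (R : nzRingType) (Q : forall t, 'M[R]_(n, kt t)) (t : Node)
  : 'M[R]_(n, rowdim t) :=
  match sons t as o return 'M[R]_(n, rowdim_of o) with
  | Some p => row_mx (Q p.1) (Q p.2)
  | None => 1%:M
  end.

End Defs.

Definition frob2 (R : nzRingType) m p (A : 'M[R]_(m, p)) : R :=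
  \sum_(i < m) \sum_(j < p) A i j ^+ 2.

(* Main.v *)
Require Import Defs.
From HB Require Import structures.
From mathcomp Require Import all_boot all_order all_algebra.
Import Order.TTheory GRing.Theory Num.Theory.
Local Open Scope ring_scope.

Lemma conn_last (T : finType) (e : rel T) w v :
  connect e w v -> w != v -> exists u, e u v && connect e w u.
Proof.
move=> /connectP [p]; elim/last_ind: p => [|p x _] /=.
  by move=> _ ->; rewrite eqxx.
rewrite rcons_path last_rcons => /andP [Hp He] -> _.
by exists (last w p); rewrite He; apply/connectP; exists p.
Qed.

Lemma uniq_parent {Node : finType} {n : nat} {sons : Node -> option (Node * Node)} {root}
  {lbl : Node -> {set 'I_n}} :
  is_bin_cluster_tree sons root lbl ->
  forall u u' w, sonrel sons u w -> sonrel sons u' w -> u = u'.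
Proof.
case=> _ _ Hr H1 _ u u' w Hu Hu'.
have Hw : w != root.
  apply/eqP => E; subst w.
  have : u \in [set t | sonrel sons t root] by rewrite inE.
  by rewrite Hr inE.
have /eqP/cards1P [x Ex] := H1 w Hw.
have : u \in [set t | sonrel sons t w] by rewrite inE.
have : u' \in [set t | sonrel sons t w] by rewrite inE.
by rewrite Ex !inE => /eqP -> /eqP ->.
Qed.

Lemma acyclic {Node : finType} {n : nat} {sons : Node -> option (Node * Node)} {root}
  {lbl : Node -> {set 'I_n}} :
  is_bin_cluster_tree sons root lbl ->
  forall x y, sonrel sons x y -> connect (sonrel sons) y x -> False.
Proof.
move=> HT; have HT' := HT; case: HT' => _ Hc Hr _ _.
pose P w := exists u, sonrel sons u w && connect (sonrel sons) w u.
have step : forall v w, sonrel sons v w -> P w -> P v.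
  move=> v w Hvw [u /andP [Huw Hwu]].
  have Euv := uniq_parent HT _ _ _ Huw Hvw; subst u.
  have [Ewv|Hne] := eqVneq w v.
    by subst w; exists v; rewrite Hvw connect0.
  have [u' /andP [Hu'v Hwu']] := conn_last _ _ _ _ Hwu Hne.
  exists u'; rewrite Hu'v /=.
  by apply: connect_trans (connect1 Hvw) Hwu'.
have prop : forall v w, connect (sonrel sons) v w -> P w -> P v.
  move=> v w /connectP [p]; elim: p v => [|z p IH] v /=; first by move=> _ ->.
  move=> /andP [Hvz Hp] Ew Pw; apply: (step v z Hvz); exact: IH.
move=> x y Hxy Hyx.
have Py : P y by exists x; rewrite Hxy Hyx.
have [u /andP [Hu _]] := prop _ _ (Hc y) Py.
have : u \in [set t | sonrel sons t root] by rewrite inE.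
by rewrite Hr inE.
Qed.

Lemma common {Node : finType} {n : nat} {sons : Node -> option (Node * Node)} {root}
  {lbl : Node -> {set 'I_n}} :
  is_bin_cluster_tree sons root lbl ->
  forall p x y, path (sonrel sons) x p -> connect (sonrel sons) y (last x p) ->
   connect (sonrel sons) x y \/ connect (sonrel sons) y x.
Proof.
move=> HT p; elim/last_ind: p => [|p z IH] x y /=; first by right.
rewrite rcons_path last_rcons => /andP [Hp He] Hyz.
have [Eyz|Hne] := eqVneq y z.
  by subst y; left; apply/connectP; exists (rcons p z); rewrite ?rcons_path ?Hp ?He ?last_rcons.
have [u' /andP [Hu' Hyu']] := conn_last _ _ _ _ Hyz Hne.
have Eu := uniq_parent HT _ _ _ Hu' He; subst u'.
exact: IH.
Qed.

Lemma siblings {Node : finType} {n : nat} {sons : Node -> option (Node * Node)} {root}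
  {lbl : Node -> {set 'I_n}} :
  is_bin_cluster_tree sons root lbl ->
  forall t a b r, sons t = Some (a, b) -> connect (sonrel sons) a r ->
     connect (sonrel sons) b r -> False.
Proof.
move=> HT t a b r Hs Har Hbr.
have Hab : a != b by case: HT => _ _ _ _ /(_ _ _ _ Hs) [].
have Ha : sonrel sons t a by rewrite /sonrel Hs eqxx.
have Hb : sonrel sons t b by rewrite /sonrel Hs eqxx orbT.
have key : forall x y, sonrel sons t x -> sonrel sons t y -> x != y ->
    connect (sonrel sons) x y -> False.
  move=> x y Hx Hy Hxy Cxy.
  have [u /andP [Hu Cxu]] := conn_last _ _ _ _ Cxy Hxy.
  have Eu := uniq_parent HT _ _ _ Hu Hy; subst u.
  exact: acyclic HT _ _ Hx Cxu.
case/connectP: Har => p Hp Er; subst r.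
case: (common HT _ _ _ Hp Hbr) => C.
  exact: key Ha Hb Hab C.
by apply: key Hb Ha _ C; rewrite eq_sym.
Qed.

Lemma conn_first (T : finType) (e : rel T) x y :
  connect e x y -> x = y \/ exists2 z, e x z & connect e z y.
Proof.
move=> /connectP [[|z p]] /=; first by left.
move=> /andP [Hxz Hp] ->; right; exists z => //; apply/connectP; by exists p.
Qed.

Lemma ss_leaf (Node : finType) (sons : Node -> option (Node * Node)) t :
  sons t = None -> sons_star sons t = [set t].
Proof.
move=> Hs; apply/setP => r; rewrite !inE.
apply/idP/eqP => [/conn_first [//|[z]]|<-]; last exact: connect0.
by rewrite /sonrel Hs.
Qed.

Lemma ss_node {Node : finType} {n : nat} {sons : Node -> option (Node * Node)} {root}
  {lbl : Node -> {set 'I_n}} :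
  is_bin_cluster_tree sons root lbl -> forall t a b,
  sons t = Some (a, b) ->
  [/\ sons_star sons t = t |: (sons_star sons a :|: sons_star sons b),
      t \notin sons_star sons a :|: sons_star sons b &
      [disjoint sons_star sons a & sons_star sons b]].
Proof.
move=> HT t a b Hs.
have Ha : sonrel sons t a by rewrite /sonrel Hs eqxx.
have Hb : sonrel sons t b by rewrite /sonrel Hs eqxx orbT.
split.
- apply/setP => r; rewrite !inE; apply/idP/idP.
    case/conn_first => [->|[z]]; first by rewrite eqxx.
    by rewrite /sonrel Hs => /orP [] /eqP -> ->; rewrite ?orbT.
  case/orP => [/eqP ->|/orP [] H]; first exact: connect0.
    exact: connect_trans (connect1 Ha) H.
  exact: connect_trans (connect1 Hb) H.
- rewrite !inE; apply/negP => /orP [] H.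
    exact: acyclic HT _ _ Ha H.
  exact: acyclic HT _ _ Hb H.
- apply/pred0P => r /=; rewrite !inE; apply/negP => /andP [H1 H2].
  exact: siblings HT _ _ _ _ Hs H1 H2.
Qed.

Lemma ss_sub (Node : finType) (sons : Node -> option (Node * Node)) t r :
  r \in sons_star sons t -> sons_star sons r \subset sons_star sons t.
Proof.
rewrite inE => Htr; apply/subsetP => x; rewrite !inE; exact: connect_trans.
Qed.

Lemma frob2_tr (R : realFieldType) m p (A : 'M[R]_(m, p)) : frob2 A = \tr (A^T *m A).
Proof.
rewrite /frob2 /mxtrace exchange_big; apply: eq_bigr => j _.
by rewrite !mxE; apply: eq_bigr => i _; rewrite !mxE expr2.
Qed.

Lemma frob2_add (R : realFieldType) m p (A B : 'M[R]_(m, p)) :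
  A^T *m B = 0 -> frob2 (A + B) = frob2 A + frob2 B.
Proof.
move=> H; have tD : (A + B)^T = A^T + B^T by apply/matrixP => i j; rewrite !mxE.
rewrite !frob2_tr tD mulmxDl !mulmxDr H.
have -> : B^T *m A = 0 by rewrite -[A]trmxK -trmx_mul H trmx0.
by rewrite !mxtraceD mxtrace0 !addr0 add0r.
Qed.

Lemma frob2_iso (R : realFieldType) m q p (U : 'M[R]_(m, q)) (D : 'M[R]_(q, p)) :
  U^T *m U = 1%:M -> frob2 (U *m D) = frob2 D.
Proof.
by move=> H; rewrite !frob2_tr trmx_mul mulmxA -(mulmxA D^T) H mulmx1.
Qed.

Lemma step_generic (R : realFieldType) n m q p (U : 'M[R]_(n, m)) (Qh : 'M[R]_(m, q))
  (X : 'M[R]_(n, p)) : U^T *m U = 1%:M ->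
  frob2 ((U *m Qh) *m (U *m Qh)^T *m X - X) =
  frob2 (Qh *m Qh^T *m (U^T *m X) - U^T *m X) + frob2 (U *m U^T *m X - X).
Proof.
move=> HU.
set D := Qh *m Qh^T *m (U^T *m X) - U^T *m X.
have -> : (U *m Qh) *m (U *m Qh)^T *m X - X = U *m D + (U *m U^T *m X - X).
  rewrite /D mulmxBr trmx_mul !mulmxA.
  rewrite addrA; congr (_ - _); rewrite addrNK.
  by rewrite -!(mulmxA U Qh).
rewrite (@frob2_add R n p (U *m D)) ?frob2_iso //.
rewrite trmx_mul -mulmxA mulmxBr !mulmxA -(mulmxA D^T U^T U) HU mulmx1.
by rewrite subrr.
Qed.

Lemma disj_mul0 (R : realFieldType) n m p (A : 'M[R]_(n, m)) (B : 'M[R]_(n, p)) :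
  (forall i, row i A = 0 \/ row i B = 0) -> A^T *m B = 0.
Proof.
move=> H; apply/matrixP => i j; rewrite !mxE big1 // => l _; rewrite mxE.
case: (H l) => E.
  by have := congr1 (fun r : 'M[R]_(1, m) => r 0 i) E; rewrite !mxE => ->; rewrite mul0r.
by have := congr1 (fun r : 'M[R]_(1, p) => r 0 j) E; rewrite !mxE => ->; rewrite mulr0.
Qed.

Lemma UtU (R : realFieldType) n (Node : finType) (sons : Node -> option (Node * Node))
  kt (Q : forall t, 'M[R]_(n, kt t)) t :
  (forall a b, sons t = Some (a, b) ->
     [/\ (Q a)^T *m Q a = 1%:M, (Q b)^T *m Q b = 1%:M & (Q a)^T *m Q b = 0]) ->
  (@Umx n Node sons kt R Q t)^T *m @Umx n Node sons kt R Q t = 1%:M.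
Proof.
rewrite /Umx /rowdim; case: (sons t) => [[a b]|] /=; last by rewrite trmx1 mulmx1.
move=> /(_ a b erefl) [H1 H2 H3].
rewrite tr_row_mx mul_col_row H1 H2 H3.
have -> : (Q b)^T *m Q a = 0 by rewrite -[Q a]trmxK -trmx_mul H3 trmx0.
by rewrite -scalar_mx_block.
Qed.

Lemma UUt (R : realFieldType) n (Node : finType) (sons : Node -> option (Node * Node))
  kt (Q : forall t, 'M[R]_(n, kt t)) t :
  @Umx n Node sons kt R Q t *m (@Umx n Node sons kt R Q t)^T =
  match sons t with Some (a, b) => Q a *m (Q a)^T + Q b *m (Q b)^T | None => 1%:M end.
Proof.
rewrite /Umx /rowdim; case: (sons t) => [[a b]|] /=; last by rewrite trmx1 mulmx1.
by rewrite tr_row_mx mul_row_col.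
Qed.
Local Open Scope ring_scope.

Lemma supp_disj (R : realFieldType) n m p (s s' : {set 'I_n}) (A : 'M[R]_(n, m)) (B : 'M[R]_(n, p)) :
  supported s A -> supported s' B -> s :&: s' = set0 -> forall i, row i A = 0 \/ row i B = 0.
Proof.
move=> HA HB Hss i; case: (boolP (i \in s)) => Hi; last by left; exact: HA.
right; apply: HB; apply/negP => Hi'.
have : i \in s :&: s' by rewrite inE Hi Hi'.
by rewrite Hss inE.
Qed.

Lemma supp_mul (R : realFieldType) n m p (s : {set 'I_n}) (A : 'M[R]_(n, m)) (B : 'M[R]_(m, p)) :
  supported s A -> supported s (A *m B).
Proof. by move=> HA i Hi; rewrite row_mul HA // mul0mx. Qed.

Lemma rowB' (R : realFieldType) n p i (A B : 'M[R]_(n, p)) : row i (A - B) = row i A - row i B.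
Proof. by apply/matrixP => x y; rewrite !mxE. Qed.
Lemma rowD' (R : realFieldType) n p i (A B : 'M[R]_(n, p)) : row i (A + B) = row i A + row i B.
Proof. by apply/matrixP => x y; rewrite !mxE. Qed.

Lemma supp_sub (R : realFieldType) n p (s : {set 'I_n}) (A B : 'M[R]_(n, p)) :
  supported s A -> supported s B -> supported s (A - B).
Proof. by move=> HA HB i Hi; rewrite rowB' HA // HB // subrr. Qed.

Lemma frob2_0 (R : realFieldType) m p : frob2 (0 : 'M[R]_(m, p)) = 0.
Proof. by rewrite frob2_tr trmx0 mul0mx mxtrace0. Qed.

Theorem mainTheorem4 (R : realFieldType) (n k N : nat) (Node : finType)
  (root : Node) (lbl : Node -> {set 'I_n}) (sons : Node -> option (Node * Node))
  (HT : is_bin_cluster_tree sons root lbl)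
  (V : Node -> 'M[R]_(n, k)) (E : Node -> 'M[R]_k)
  (HVsupp : forall t, supported (lbl t) (V t))
  (Hnest : forall t t', sonrel sons t t' ->
     forall i, i \in lbl t' -> row i (V t) = row i (V t' *m E t'))
  (kt : Node -> nat) (Q : forall t, 'M[R]_(n, kt t))
  (Qh : forall t, 'M[R]_(rowdim n sons kt t, kt t))
  (Vh : forall t, 'M[R]_(rowdim n sons kt t, k))
  (HQsupp : forall t, supported (lbl t) (Q t))
  (HQh : forall t, (Qh t)^T *m Qh t = 1%:M)
  (HQdef : forall t, Q t = @Umx n Node sons kt R Q t *m Qh t)
  (HVh : forall t, Vh t = (@Umx n Node sons kt R Q t)^T *m V t)
  (t0 : Node) (M : Node -> 'M[R]_(k, N))
  (HM : forall r r', r \in sons_star sons t0 -> sonrel sons r r' -> M r' = E r' *m M r) :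
  frob2 (Q t0 *m (Q t0)^T *m V t0 *m M t0 - V t0 *m M t0)
  = \sum_(r in sons_star sons t0)
      frob2 (Qh r *m (Qh r)^T *m Vh r *m M r - Vh r *m M r).
Proof.
have Hlbl : forall t a b, sons t = Some (a, b) ->
    [/\ a != b, lbl a :&: lbl b = set0 & lbl a :|: lbl b = lbl t].
  by case: HT.
have card_child : forall t a b, sons t = Some (a, b) ->
    (#|sons_star sons a| < #|sons_star sons t|)%N /\ (#|sons_star sons b| < #|sons_star sons t|)%N.
  move=> t a b Hs; have [-> Hn _] := ss_node HT _ _ _ Hs.
  rewrite cardsU1 Hn add1n !ltnS; split; apply: subset_leq_card.
    exact: subsetUl.
  exact: subsetUr.
have UU : forall s t, (#|sons_star sons t| <= s)%N ->
   (@Umx n Node sons kt R Q t)^T *m @Umx n Node sons kt R Q t = 1%:M /\ (Q t)^T *m Q t = 1%:M.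
  elim=> [|s IH] t Hc.
    by move: Hc; rewrite leqn0 => /eqP/cards0_eq/setP/(_ t); rewrite !inE connect0.
  have HU : (@Umx n Node sons kt R Q t)^T *m @Umx n Node sons kt R Q t = 1%:M.
    apply: UtU => a b Hs.
    have [Ca Cb] := card_child _ _ _ Hs.
    have [_ Hd _] := Hlbl _ _ _ Hs.
    split.
    - by case: (IH a _); first by rewrite -ltnS (leq_trans Ca).
    - by case: (IH b _); first by rewrite -ltnS (leq_trans Cb).
    - by apply: disj_mul0; apply: supp_disj Hd.
  split=> //.
  by rewrite HQdef trmx_mul mulmxA -(mulmxA _ _ (@Umx n Node sons kt R Q t)) HU mulmx1.
have UUt' : forall t, (@Umx n Node sons kt R Q t)^T *m @Umx n Node sons kt R Q t = 1%:M.
  by move=> t; case: (UU _ t (leqnn _)).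
have QQ : forall t, (Q t)^T *m Q t = 1%:M.
  by move=> t; case: (UU _ t (leqnn _)).
pose F t := frob2 (Q t *m (Q t)^T *m (V t *m M t) - V t *m M t).
pose G t := frob2 (Qh t *m (Qh t)^T *m Vh t *m M t - Vh t *m M t).
have Weq : forall t, t \in sons_star sons t0 ->
   frob2 (@Umx n Node sons kt R Q t *m (@Umx n Node sons kt R Q t)^T *m (V t *m M t) - V t *m M t)
   = match sons t with Some (a, b) => F a + F b | None => 0 end.
  move=> t Ht; rewrite UUt.
  case Hs: (sons t) => [[a b]|]; last by rewrite mul1mx subrr frob2_0.
  have [Hab Hd Hu] := Hlbl _ _ _ Hs.
  have Ha : sonrel sons t a by rewrite /sonrel Hs eqxx.
  have Hb : sonrel sons t b by rewrite /sonrel Hs eqxx orbT.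
  have Hd' : lbl b :&: lbl a = set0 by rewrite setIC.
  set X1 := V a *m M a; set X2 := V b *m M b.
  have S1 : supported (lbl a) X1 by apply: supp_mul.
  have S2 : supported (lbl b) X2 by apply: supp_mul.
  have HX : V t *m M t = X1 + X2.
    apply/row_matrixP => i; rewrite rowD'.
    case: (boolP (i \in lbl a)) => Hia.
      have Hib : i \notin lbl b.
        apply/negP => Hib; have : i \in lbl a :&: lbl b by rewrite inE Hia Hib.
        by rewrite Hd inE.
      rewrite (S2 i Hib) addr0 /X1 !row_mul (Hnest _ _ Ha _ Hia) row_mul -mulmxA.
      by rewrite -(HM _ _ Ht Ha).
    case: (boolP (i \in lbl b)) => Hib.
      rewrite (S1 i Hia) add0r /X2 !row_mul (Hnest _ _ Hb _ Hib) row_mul -mulmxA.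
      by rewrite -(HM _ _ Ht Hb).
    have Hit : i \notin lbl t by rewrite -Hu inE negb_or Hia Hib.
    by rewrite (S1 i Hia) (S2 i Hib) addr0 row_mul (HVsupp t i Hit) mul0mx.
  have Z1 : (Q a)^T *m X2 = 0 by apply: disj_mul0; apply: supp_disj (HQsupp a) S2 Hd.
  have Z2 : (Q b)^T *m X1 = 0 by apply: disj_mul0; apply: supp_disj (HQsupp b) S1 Hd'.
  rewrite HX mulmxDl -!mulmxA !mulmxDr Z1 Z2 !mulmx0 addr0 add0r.
  have -> : Q a *m ((Q a)^T *m X1) + Q b *m ((Q b)^T *m X2) - (X1 + X2) =
     (Q a *m ((Q a)^T *m X1) - X1) + (Q b *m ((Q b)^T *m X2) - X2).
    by rewrite opprD addrACA.
  rewrite frob2_add; last first.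
    apply: disj_mul0; apply: supp_disj Hd.
      by apply: supp_sub => //; apply: supp_mul.
    by apply: supp_sub => //; apply: supp_mul.
  by rewrite /F !mulmxA.
have step : forall t, t \in sons_star sons t0 ->
   F t = G t + match sons t with Some (a, b) => F a + F b | None => 0 end.
  move=> t Ht; rewrite -(Weq t Ht) /F /G HVh (HQdef t) step_generic //.
  by rewrite !mulmxA.
have ind : forall s t, t \in sons_star sons t0 -> (#|sons_star sons t| <= s)%N ->
    F t = \sum_(r in sons_star sons t) G r.
  elim=> [|s IH] t Ht Hc.
    by move: Hc; rewrite leqn0 => /eqP/cards0_eq/setP/(_ t); rewrite !inE connect0.
  rewrite step //.
  case Hs: (sons t) => [[a b]|]; last by rewrite (ss_leaf _ _ _ Hs) big_set1 addr0.
  have [Ca Cb] := card_child _ _ _ Hs.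
  have [-> Hn Hd] := ss_node HT _ _ _ Hs.
  have Ha : sonrel sons t a by rewrite /sonrel Hs eqxx.
  have Hb : sonrel sons t b by rewrite /sonrel Hs eqxx orbT.
  have Hat : a \in sons_star sons t0.
    by move: Ht; rewrite !inE => Ht; apply: connect_trans Ht (connect1 Ha).
  have Hbt : b \in sons_star sons t0.
    by move: Ht; rewrite !inE => Ht; apply: connect_trans Ht (connect1 Hb).
  rewrite big_setU1 //=.
  rewrite (eq_bigl [predU sons_star sons a & sons_star sons b]); last by move=> x; rewrite !inE.
  rewrite bigU //= (IH a) ?(IH b) //.
    by rewrite -ltnS (leq_trans Cb).
  by rewrite -ltnS (leq_trans Ca).
transitivity (F t0); first by rewrite /F !mulmxA.
rewrite (ind _ t0 _ (leqnn _)) //; last by rewrite inE connect0.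
Qed.
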